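(* Let $t\ge 0$ be an integer and consider any complete run of the exponential-edge chip-firing process starting with $2^{t+2}$ chips at site $0$. For $0\le k\le t$, site $k$ fires exactly $2$ more times than site $k+1$. Similarly, for $-t\le k\le 0$, site $k$ fires exactly $2$ more times than site $k-1$.
   Context: Exponential-edge graph with parameter $t$: the vertex set is $\mathbb{Z}$; for each $0\le k\le t$ there are $2^{t-k}$ parallel edges between $k$ and $k+1$ and $2^{t-k}$ parallel edges between $-k$ and $-k-1$; all other pairs of adjacent integers ($i,i+1$ with $i\ge t+1$ or $i+1\le -t-1$) are joined by a single edge. If a site has $a$ edges to its left neighbor and $b$ edges to its right neighbor, a firing move at that site chooses $a+b$ chips present there and sends the $a$ smallest of them to the left neighbor and the $b$ largest to the right neighbor (chips carry distinct labels from a totally ordered set). A complete run is a sequence of legal firing moves ending in a configuration where no firing move is possible. *)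

(* Defs.v *)
From mathcomp Require Import all_boot all_order all_algebra.
Set Implicit Arguments. Unset Strict Implicit. Unset Printing Implicit Defensive.
Import Order.TTheory GRing.Theory Num.Theory.
Local Open Scope ring_scope.

(* Number of parallel edges between integer sites i and i+1 in the
   exponential-edge graph with parameter t:
   - 2^(t-k) edges between k and k+1, for 0 <= k <= t  (i = k);
   - 2^(t-k) edges between -k-1 and -k, for 0 <= k <= t (i = -k-1,
     so |i| = k+1 and 2^(t-k) = 2^(t+1-|i|));
   - a single edge otherwise. *)
Definition nedges (t : nat) (i : int) : nat :=
  if (0 <= i) && (i <= t%:Z) then (2 ^ (t - `|i|))%N
  else if (- (t.+1)%:Z <= i) && (i <= -1) then (2 ^ (t.+1 - `|i|))%N
  else 1%N.

Definition left_deg (t : nat) (v : int) : nat := nedges t (v - 1).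
Definition right_deg (t : nat) (v : int) : nat := nedges t v.

(* Chips are labelled by distinct natural numbers (a totally ordered set);
   a configuration gives the site of every chip. *)
Definition config := nat -> int.

Definition legal_move (t : nat) (L : seq nat) (c : config) (v : int)
  (S : seq nat) : bool :=
  [&& uniq S, all (fun x => (x \in L) && (c x == v)) S
    & size S == (left_deg t v + right_deg t v)%N].

(* Result of the firing move: the left_deg smallest chips of S go to v-1,
   the right_deg largest chips of S go to v+1, the others stay. *)
Definition fire (t : nat) (c : config) (v : int) (S : seq nat) : config :=
  fun x => if x \in S then
             (if (count (fun y => (y < x)%N) S < left_deg t v)%N
              then v - 1 else v + 1)
           else c x.

Inductive is_run (t : nat) (L : seq nat) :
  config -> seq (int * seq nat) -> config -> Prop :=
| run_nil c : is_run t L c [::] c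
| run_cons c v S ms c' :
    legal_move t L c v S ->
    is_run t L (fire t c v S) ms c' ->
    is_run t L c ((v, S) :: ms) c'.

Definition stable (t : nat) (L : seq nat) (c : config) : Prop :=
  ~ exists v S, legal_move t L c v S.

Definition nfirings (ms : seq (int * seq nat)) (v : int) : nat :=
  count (fun m => m.1 == v) ms.

Definition all_at_zero : config := fun _ => 0.

(* Main.v *)
Require Import Defs.
From mathcomp Require Import all_boot all_order all_algebra.
From mathcomp Require Import zify ring lra.
Import Order.TTheory GRing.Theory Num.Theory.
Local Open Scope ring_scope.

Section Arith.
Variable t : nat.

Definition E (n : nat) : int := if (n <= t)%N then (2 ^ (t - n))%N%:Z else 1.
Definition e (i : int) : int := (nedges t i)%:Z.

Lemma E_pos n : 0 < E n.
Proof. rewrite /E; case: ifP => // _; rewrite ltz_nat expn_gt0. by []. Qed.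

Lemma E_double m : (m < t)%N -> E m = 2 * E m.+1.
Proof.
move=> H; rewrite /E ifT; last by lia. rewrite ifT; last by lia.
have -> : (t - m = (t - m.+1).+1)%N by lia.
by rewrite expnS PoszM.
Qed.

Lemma E_one n : (t <= n)%N -> E n = 1.
Proof.
move=> H; rewrite /E; case: ifP => // H2.
have -> : (t - n = 0)%N by lia. by [].
Qed.

Lemma E0N : (2 ^ (t + 2))%N%:Z = 4 * E 0.
Proof. rewrite /E /= subn0 expnD PoszM mulrC. by []. Qed.

Lemma eP n : e (Posz n) = E n.
Proof.
rewrite /e /nedges /E.
case: (leqP n t) => H.
  rewrite ifT; last by lia. by [].
have -> : ((0 <= Posz n) && (Posz n <= t%:Z)) = false by lia.
have -> : ((- Posz t.+1 <= Posz n) && (Posz n <= -1)) = false by lia.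
by [].
Qed.

Lemma eN m : e (- Posz m.+1) = E m.
Proof.
rewrite /e /nedges /E.
have -> : ((0 <= - Posz m.+1) && (- Posz m.+1 <= t%:Z)) = false by lia.
case: (leqP m t) => H.
  have -> : ((- Posz t.+1 <= - Posz m.+1) && (- Posz m.+1 <= -1)) = true by lia.
  by rewrite abszN /= subSS.
have -> : ((- Posz t.+1 <= - Posz m.+1) && (- Posz m.+1 <= -1)) = false by lia.
by [].
Qed.


Definition Q (g : nat -> int) (m : nat) : int :=
  - g m.+1 * (E m + E m.+1) + g m * E m + g m.+2 * E m.+1.

Lemma side (g : nat -> int) :
  (forall m, (m <= t)%N -> 0 <= Q g m < E m + E m.+1) ->
  g t.+2 = 0 -> g t.+1 <= 1 ->
  [/\ g 0%N - g 1%N <= 2,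
      g 0%N - g 1%N >= 2 -> forall k, (k <= t)%N -> g k = g k.+1 + 2,
      g 0%N - g 1%N >= 2 -> g 0%N = 2 * t%:Z + 3 &
      g 0%N - g 1%N <= 1 -> g 0%N <= 2 * t%:Z + 2].
Proof.
move=> H H2 H1.
have Hin m : (m < t)%N -> 0 <= 2 * g m - 3 * g m.+1 + g m.+2 <= 2.
  move=> Hm; have := H m (ltnW Hm); rewrite /Q (E_double m Hm).
  have := E_pos m.+1; set p := E m.+1. move=> *. nia.
have Hlast : 0 <= g t - 2 * g t.+1 + g t.+2 <= 1.
  have := H t (leqnn t); rewrite /Q !E_one //. lia.
have Hd : forall j, (j <= t)%N -> g (t - j)%N - g (t - j).+1 <= 2.
  elim=> [|j IH] Hj.
    rewrite subn0. lia.
  have Hj' := IH (ltnW Hj).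
  have Hm := Hin (t - j.+1)%N ltac:(lia).
  have E1 : ((t - j.+1).+1 = t - j)%N by lia.
  rewrite E1 in Hm *. lia.
have Hdk : forall k, (k <= t)%N -> g k - g k.+1 <= 2.
  move=> k Hk; have := Hd (t - k)%N (leq_subr _ _); rewrite subKn //.
have Hge : g 0%N - g 1%N >= 2 -> forall k, (k <= t)%N -> g k - g k.+1 >= 2.
  move=> H0; elim=> [|k IH] Hk //.
  have := Hin k Hk; have := IH (ltnW Hk). lia.
have Heq : g 0%N - g 1%N >= 2 -> forall k, (k <= t)%N -> g k = g k.+1 + 2.
  move=> H0 k Hk; have := Hge H0 k Hk; have := Hdk k Hk. lia.
split => //.
- exact: Hdk 0%N (leq0n t).
- move=> H0.
  have Hs : forall k, (k <= t.+1)%N -> g 0%N = g k + 2 * k%:Z.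
    elim=> [|k IH] Hk; first by lia.
    have := IH (ltnW Hk); have := Heq H0 k Hk. lia.
  have := Hs t.+1 (leqnn _); have := Heq H0 t (leqnn _). lia.
- move=> H0.
  have Hs : forall k, (1 <= k <= t.+1)%N -> g 0%N - g k <= g 0%N - g 1%N + 2 * (k%:Z - 1).
    elim=> [|k IH] Hk; first by lia.
    case: k IH Hk => [|k] IH Hk; first by lia.
    have := IH ltac:(lia); have := Hdk k.+1 ltac:(lia). lia.
  have := Hs t.+1 ltac:(lia). lia.
Qed.

End Arith.
Lemma exists_max (S : seq nat) : S != [::] ->
  exists2 m, m \in S & forall y, y \in S -> (y <= m)%N.
Proof.
elim: S => [//|a S IH] _.
case: (S =P [::]) => [->|/eqP HS].
  exists a; first by rewrite inE eqxx.
  by move=> y; rewrite inE => /eqP ->.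
have [m Hm Hmax] := IH HS.
case: (leqP a m) => Ham.
  exists m; first by rewrite inE Hm orbT.
  by move=> y; rewrite inE => /orP [/eqP ->|/Hmax].
exists a; first by rewrite inE eqxx.
move=> y; rewrite inE => /orP [/eqP ->//|/Hmax H]. lia.
Qed.

Lemma count_rank (S : seq nat) (l : nat) : uniq S ->
  count (fun x => (count (fun y => (y < x)%N) S < l)%N) S = minn l (size S).
Proof.
have [n Hn] : exists n, size S = n by exists (size S).
elim: n S Hn => [|n IH] S Hn uS.
  by move/size0nil: Hn => ->; rewrite /= minn0.
have [m mS Hmax] : exists2 m, m \in S & forall y, y \in S -> (y <= m)%N.
  by apply: exists_max; apply/eqP => H; rewrite H in Hn.
have pS := perm_to_rem mS.
set S' := rem m S.
have uS' : uniq S' by apply: rem_uniq.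
have Hlt : forall y, y \in S' -> (y < m)%N.
  move=> y; rewrite (mem_rem_uniq _ uS) inE => /andP [Hy1 Hy2].
  have := Hmax y Hy2. move: Hy1 => /eqP. lia.
have HS' : size S' = n by rewrite size_rem // Hn.
have pcS := elimT permP pS.
rewrite pcS.
transitivity (count (fun x => (count (fun y => (y < x)%N) (m :: S') < l)%N) (m :: S')).
  by apply: eq_count => x; rewrite pcS.
rewrite /= ltnn add0n.
have -> : count (fun y => (y < m)%N) S' = n.
  rewrite -HS' -count_predT; apply: eq_in_count => y /Hlt ->. by [].
have -> : count (fun x => ((m < x)%N + count (fun y => (y < x)%N) S' < l)%N) S'
        = count (fun x => (count (fun y => (y < x)%N) S' < l)%N) S'.
  apply: eq_in_count => x /Hlt Hx. have -> : (m < x)%N = false by lia. by [].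
rewrite IH // HS' Hn. case: (ltnP n l) => H; lia.
Qed.

Lemma count_split (T : Type) (a b : pred T) (s : seq T) :
  count a s = (count (fun x => b x && a x) s + count (fun x => ~~ b x && a x) s)%N.
Proof.
elim: s => [//|x s IH] /=. rewrite IH. case: (b x); case: (a x) => /=; lia.
Qed.

Lemma count_sub (L S : seq nat) (Q : pred nat) : uniq L -> uniq S ->
  {subset S <= L} ->
  count (fun x => (x \in S) && Q x) L = count Q S.
Proof.
move=> uL uS sub.
have -> : count (fun x => (x \in S) && Q x) L = count Q (filter (mem S) L).
  by rewrite count_filter; apply: eq_count => x /=; rewrite andbC.
apply/permP; apply: uniq_perm; first exact: filter_uniq.
  exact: uS.
move=> x; rewrite mem_filter /=. case xS: (x \in S) => //. by rewrite (sub x xS).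
Qed.

Lemma count_andb_const (T : Type) (P : pred T) (b : bool) (s : seq T) :
  count (fun x => b && P x) s = (b * count P s)%N.
Proof. case: b => /=; first by rewrite mul1n. by rewrite mul0n count_pred0. Qed.

Definition cnt (L : seq nat) (c : config) (v : int) : nat :=
  count (fun x => c x == v) L.

Lemma fire_cnt t L c v S : uniq L -> legal_move t L c v S -> forall w,
  (cnt L (fire t c v S) w + (v == w) * (left_deg t v + right_deg t v)
   = cnt L c w + ((v - 1)%R == w) * left_deg t v + ((v + 1)%R == w) * right_deg t v)%N.
Proof.
move=> uL /and3P [uS /allP allS /eqP sS] w.
have sub : {subset S <= L} by move=> x /allS /andP [].
have cS : forall x, x \in S -> c x = v by move=> x /allS /andP [_ /eqP].
rewrite /cnt (count_split _ _ (fun x => x \in S) L) [in RHS](count_split _ _ (fun x => x \in S) L).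
rewrite !count_sub //.
have -> : count (fun x => ~~ (x \in S) && (fire t c v S x == w)) L
        = count (fun x => ~~ (x \in S) && (c x == w)) L.
  apply: eq_count => x /=; rewrite /fire. by case: (x \in S).
have -> : count (fun x => c x == w) S = ((v == w) * size S)%N.
  rewrite -count_predT -count_andb_const. apply: eq_in_count => x /cS -> /=.
  by rewrite andbT.
set rk := fun x => (count (fun y => (y < x)%N) S < left_deg t v)%N.
have -> : count (fun x => fire t c v S x == w) S
   = (((v - 1)%R == w) * left_deg t v + ((v + 1)%R == w) * right_deg t v)%N.
  transitivity (count (fun x => (if rk x then v - 1 else v + 1) == w) S).
    apply: eq_in_count => x xS /=. by rewrite /fire xS.
  rewrite (count_split _ _ rk S).
  have -> : count (fun x => rk x && ((if rk x then v - 1 else v + 1) == w)) S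
          = count (fun x => ((v - 1)%R == w) && rk x) S.
    apply: eq_count => x /=. case: (rk x) => /=; last by rewrite andbF. by rewrite andbT.
  have -> : count (fun x => ~~ rk x && ((if rk x then v - 1 else v + 1) == w)) S
          = count (fun x => ((v + 1)%R == w) && (predC rk) x) S.
    apply: eq_count => x /=. case: (rk x) => /=; first by rewrite andbF. by rewrite andbT.
  rewrite !count_andb_const.
  have H1 : count rk S = left_deg t v.
    rewrite /rk count_rank // sS. lia.
  have H2 := count_predC rk S.
  rewrite H1. congr (_ + _)%N. congr (_ * _)%N. lia.
rewrite sS. lia.
Qed.

Definition phi (t : nat) (N : int) (P : int -> int) (w : int) : int :=
  (w == 0)%:Z * N - P w * (e t (w - 1) + e t w) + P (w - 1) * e t (w - 1)
  + P (w + 1) * e t w.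

Lemma phi_ext t N P P' w : (forall x, P x = P' x) -> phi t N P w = phi t N P' w.
Proof. by move=> H; rewrite /phi !H. Qed.

Lemma shift_eq (v w : int) (a : int -> int) :
  - (v == w)%:Z * (a (w-1) + a w) + (v == w - 1)%:Z * a (w-1) + (v == w + 1)%:Z * a w
  = - (v == w)%:Z * (a (v-1) + a v) + (v - 1 == w)%:Z * a (v-1) + (v + 1 == w)%:Z * a v.
Proof.
case: (eqVneq v w) => [<-|H1].
  have -> : (v == v - 1) = false by lia.
  have -> : (v == v + 1) = false by lia.
  have -> : (v - 1 == v) = false by lia.
  have -> : (v + 1 == v) = false by lia.
  rewrite /=. lia.
case: (eqVneq v (w - 1)) => [->|H2].
  have -> : w - 1 + 1 = w by lia.
  have -> : (w - 1 == w + 1) = false by lia.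
  have -> : (w - 1 - 1 == w) = false by lia.
  rewrite /= eqxx /=. lia.
case: (eqVneq v (w + 1)) => [->|H3].
  have -> : w + 1 - 1 = w by lia.
  have -> : (w + 1 + 1 == w) = false by lia.
  rewrite /= eqxx /=. lia.
have -> : (v - 1 == w) = false by lia.
have -> : (v + 1 == w) = false by lia.
rewrite /=. lia.
Qed.

Lemma step t L N c v S P : uniq L -> legal_move t L c v S ->
  (forall w, (cnt L c w)%:Z = phi t N P w) ->
  forall w, (cnt L (fire t c v S) w)%:Z = phi t N (fun x => P x + (v == x)%:Z) w.
Proof.
move=> uL Hl H w.
have := fire_cnt t L c v S uL Hl w => /(congr1 Posz).
rewrite !PoszD !PoszM H /left_deg /right_deg.
have := shift_eq v w (e t).
rewrite /phi /e. lia.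
Qed.

Lemma run_inv t L N c ms c' : uniq L -> is_run t L c ms c' ->
  forall P, (forall w, (cnt L c w)%:Z = phi t N P w) ->
  forall w, (cnt L c' w)%:Z = phi t N (fun x => P x + (nfirings ms x)%:Z) w.
Proof.
move=> uL; elim=> {c ms c'} [c|c v S ms c' Hl Hr IH] P H w.
  rewrite H; apply: phi_ext => x; by rewrite /nfirings /= addr0.
rewrite (IH _ (step _ _ _ _ _ _ _ uL Hl H)); apply: phi_ext => x.
rewrite /nfirings /= PoszD addrA. by [].
Qed.

Lemma legal_cnt t L c v S : uniq L -> legal_move t L c v S ->
  (left_deg t v + right_deg t v <= cnt L c v)%N.
Proof.
move=> uL /and3P [uS /allP allS /eqP sS].
have sub : {subset S <= L} by move=> x /allS /andP [].
rewrite /cnt (count_split _ _ (fun x => x \in S) L) count_sub //.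
have -> : count (fun x => c x == v) S = size S.
  rewrite -count_predT; apply: eq_in_count => x /allS /andP [_ ->]. by [].
rewrite sS. exact: leq_addr.
Qed.

Lemma stable_cnt t L c : uniq L -> stable t L c -> forall v,
  (cnt L c v < left_deg t v + right_deg t v)%N.
Proof.
move=> uL Hs v; rewrite ltnNge; apply/negP => H; apply: Hs.
exists v, (take (left_deg t v + right_deg t v) (filter (fun x => c x == v) L)).
apply/and3P; split.
- apply: take_uniq. exact: filter_uniq.
- apply/allP => x /mem_take; rewrite mem_filter => /andP [-> ->]. by [].
- rewrite size_takel; last by rewrite size_filter. by [].
Qed.

Lemma least_action t L N c ms c' u : uniq L -> is_run t L c ms c' ->
  (forall w, phi t N u w < e t (w - 1) + e t w) ->
  forall P, (forall w, (cnt L c w)%:Z = phi t N P w) -> (forall w, P w <= u w) ->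
  forall w, P w + (nfirings ms w)%:Z <= u w.
Proof.
move=> uL; elim=> {c ms c'} [c|c v S ms c' Hl Hr IH] Hu P H Hle w.
  rewrite /nfirings /= addr0. exact: Hle.
have Hlt : P v < u v.
  rewrite ltNge; apply/negP => Hge.
  have Heq : P v = u v by have := Hle v; lia.
  have Hc : e t (v - 1) + e t v <= (cnt L c v)%:Z.
    rewrite /e -PoszD lez_nat. exact: legal_cnt uL Hl.
  rewrite H /phi Heq in Hc.
  have := Hu v; rewrite /phi.
  have := Hle (v - 1); have := Hle (v + 1).
  have e1 : 0 <= e t (v - 1) by [].
  have e2 : 0 <= e t v by [].
  nia.
have Hle' : forall x, P x + (v == x)%:Z <= u x.
  move=> x; case: (eqVneq v x) => [<-|_] /=; last by rewrite addr0.
  lia.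
have := IH Hu _ (step _ _ _ _ _ _ _ uL Hl H) Hle' w.
rewrite /nfirings /= PoszD. lia.
Qed.

Definition h (t a : nat) : int :=
  if (a <= t.+1)%N then 2 * ((t.+1 - a)%N)%:Z + 1 else 0.
Definition u0 (t : nat) (w : int) : int := h t `|w|.

Lemma Q_ext t g g' m : (forall k, g k = g' k) -> Q t g m = Q t g' m.
Proof. by move=> H; rewrite /Q !H. Qed.

Lemma phi_pos t N P m : phi t N P (Posz m.+1) = Q t (fun k => P (Posz k)) m.
Proof.
rewrite /phi /Q.
have -> : Posz m.+1 - 1 = Posz m by lia.
have -> : Posz m.+1 + 1 = Posz m.+2 by lia.
rewrite !eP /=. lia.
Qed.

Lemma phi_neg t N P m : phi t N P (- Posz m.+1) = Q t (fun k => P (- Posz k)) m.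
Proof.
rewrite /phi /Q.
have -> : - Posz m.+1 - 1 = - Posz m.+2 by lia.
have -> : - Posz m.+1 + 1 = - Posz m by lia.
have -> : (- Posz m.+1 == 0) = false by lia.
rewrite !eN /=. lia.
Qed.

Lemma phi_zero t N P : phi t N P (Posz 0) =
  N - P (Posz 0) * (2 * E t 0) + P (- Posz 1) * E t 0 + P (Posz 1) * E t 0.
Proof.
rewrite /phi.
have -> : Posz 0 - 1 = - Posz 1 by lia.
have -> : Posz 0 + 1 = Posz 1 by lia.
rewrite eN eP /=. lia.
Qed.

Lemma Qu0 t m : Q t (h t) m < E t m + E t m.+1.
Proof.
case: (ltnP m t) => Hm.
  rewrite /Q /h (E_double t m Hm).
  rewrite ifT; last by lia. rewrite ifT; last by lia. rewrite ifT; last by lia.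
  have := E_pos t m.+1. nia.
rewrite /Q (E_one t m) // (E_one t m.+1); last by lia.
rewrite /h; case: ifP => ?; case: ifP => ?; case: ifP => ?; lia.
Qed.

Lemma u0_stab t : forall w, phi t (4 * E t 0) (u0 t) w < e t (w - 1) + e t w.
Proof.
case=> [[|m]|m].
- rewrite phi_zero.
  have -> : Posz 0 - 1 = - Posz 1 by lia.
  rewrite eN eP /u0 abszN /h /=.
  have := E_pos t 0. nia.
- rewrite phi_pos.
  have -> : Posz m.+1 - 1 = Posz m by lia.
  rewrite !eP. exact: Qu0.
- rewrite NegzE phi_neg.
  have -> : - Posz m.+1 - 1 = - Posz m.+2 by lia.
  rewrite !eN (Q_ext _ _ (h t)); last by move=> k; rewrite /u0 abszN.
  rewrite addrC. exact: Qu0.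
Qed.

Theorem lemma3p4 (t : nat) (L : seq nat) (ms : seq (int * seq nat))
  (cf : config) :
  uniq L -> size L = (2 ^ (t + 2))%N ->
  is_run t L all_at_zero ms cf -> stable t L cf ->
  (forall k : int, 0 <= k <= t%:Z ->
     nfirings ms k = (nfirings ms (k + 1) + 2)%N) /\
  (forall k : int, - t%:Z <= k <= 0 ->
     nfirings ms k = (nfirings ms (k - 1) + 2)%N).
Proof.
move=> uL HN Hrun Hst.
pose N := 4 * E t 0.
have Hinit : forall w, (cnt L all_at_zero w)%:Z = phi t N (fun _ => 0) w.
  move=> w; rewrite /cnt /all_at_zero /phi.
  case: (eqVneq w 0) => [->|Hw] /=.
    rewrite (@eq_count _ _ predT) // count_predT HN E0N /N. lia.
  rewrite (@eq_count _ _ pred0) ?count_pred0; first lia.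
  by [].
have Hf := run_inv _ _ _ _ _ _ uL Hrun _ Hinit.
pose f := fun x => (nfirings ms x)%:Z.
have Hf' : forall w, (cnt L cf w)%:Z = phi t N f w.
  by move=> w; rewrite Hf; apply: phi_ext => x; rewrite add0r.
have Hst' : forall w, phi t N f w < e t (w - 1) + e t w.
  by move=> w; rewrite -Hf' /e -PoszD ltz_nat; apply: stable_cnt.
have Hnn : forall w, 0 <= phi t N f w by move=> w; rewrite -Hf'.
have Hle : forall w, f w <= u0 t w.
  move=> w.
  have := least_action _ _ _ _ _ _ _ uL Hrun (u0_stab t) _ Hinit _ w.
  rewrite add0r; apply.
  by move=> x; rewrite /u0 /h; case: ifP => _; lia.
have f0 : forall w, 0 <= f w by move=> w; rewrite /f.
have Hq1 : forall m, (m <= t)%N -> 0 <= Q t (fun k => f (Posz k)) m < E t m + E t m.+1.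
  move=> m Hm; rewrite -(phi_pos t N); apply/andP; split; first exact: Hnn.
  have := Hst' (Posz m.+1).
  have -> : Posz m.+1 - 1 = Posz m by lia.
  by rewrite !eP.
have Hq2 : forall m, (m <= t)%N -> 0 <= Q t (fun k => f (- Posz k)) m < E t m + E t m.+1.
  move=> m Hm; rewrite -(phi_neg t N); apply/andP; split; first exact: Hnn.
  have := Hst' (- Posz m.+1).
  have -> : - Posz m.+1 - 1 = - Posz m.+2 by lia.
  by rewrite !eN addrC.
have Ht1 : f (Posz t.+2) = 0.
  have := Hle (Posz t.+2); have := f0 (Posz t.+2).
  rewrite /u0 /h /= ifF; last by lia. lia.
have Ht2 : f (Posz t.+1) <= 1.
  have := Hle (Posz t.+1); rewrite /u0 /h /= ifT; last by lia.
  rewrite subnn. lia.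
have Ht3 : f (- Posz t.+2) = 0.
  have := Hle (- Posz t.+2); have := f0 (- Posz t.+2).
  rewrite /u0 abszN /h /= ifF; last by lia. lia.
have Ht4 : f (- Posz t.+1) <= 1.
  have := Hle (- Posz t.+1); rewrite /u0 abszN /h /= ifT; last by lia.
  rewrite subnn. lia.
have [r1 r2 r3 r4] := side t (fun k => f (Posz k)) Hq1 Ht1 Ht2.
have [l1 l2 l3 l4] := side t (fun k => f (- Posz k)) Hq2 Ht3 Ht4.
have c1 := Hnn (Posz 0); have c2 := Hst' (Posz 0).
rewrite phi_zero in c1 c2.
rewrite (_ : Posz 0 - 1 = - Posz 1) in c2; last by lia.
rewrite eN eP in c2.
have g0 : f (- Posz 0) = f (Posz 0) by [].
move: r1 r2 r3 r4 l1 l2 l3 l4 => /= r1 r2 r3 r4 l1 l2 l3 l4.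
rewrite g0 in l1 l2 l3 l4.
have EP := E_pos t 0.
have Hs : 3 <= (f (Posz 0) - f (Posz 1)) + (f (Posz 0) - f (- Posz 1)).
  rewrite /N in c1 c2. nia.
have Hr : f (Posz 0) - f (Posz 1) >= 2 by lia.
have Hl : f (Posz 0) - f (- Posz 1) >= 2 by lia.
split.
- case=> [n|n] Hk; last by lia.
  have := r2 Hr n ltac:(lia).
  have -> : Posz n + 1 = Posz n.+1 by lia.
  rewrite /f. lia.
- case=> [n|n] Hk.
    have -> : n = 0%N by lia.
    have := l2 Hl 0%N (leq0n _).
    have -> : Posz 0 - 1 = - Posz 1 by lia.
    rewrite g0 /f. lia.
  have := l2 Hl n.+1 ltac:(lia).
  rewrite NegzE.
  have -> : - Posz n.+1 - 1 = - Posz n.+2 by lia.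
  rewrite /f. lia.
Qed.
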